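(* Let $s \ge 4$ and let $X$ be an antipodal $s$-distance set in the unit sphere $S^{d-1}\subset\mathbb{R}^d$ with $|X| \ge 4\binom{d+s-3}{s-2} + 2$. Then every $\beta \in B(X)$ is a rational number.
   Context: A finite set $X \subset \mathbb{R}^d$ is an $s$-distance set if the set of Euclidean distances between distinct points of $X$ has exactly $s$ elements. $X$ is antipodal if $-x \in X$ for every $x \in X$. For $X \subset S^{d-1}$, $B(X) = \{(x,y) : x, y \in X, x \neq y\}$, where $(\cdot,\cdot)$ is the standard inner product. *)

(* Defs.v *)
From HB Require Import structures.
From mathcomp Require Import all_boot all_order all_algebra.
From mathcomp Require Import finmap.
Set Implicit Arguments. Unset Strict Implicit. Unset Printing Implicit Defensive.
Import Order.TTheory GRing.Theory Num.Theory.
Local Open Scope ring_scope.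
Local Open Scope fset_scope.

Definition dotp {R : ringType} {d : nat} (x y : 'rV[R]_d) : R :=
  \sum_(i < d) x 0 i * y 0 i.

Definition edist {R : rcfType} {d : nat} (x y : 'rV[R]_d) : R :=
  Num.sqrt (dotp (x - y) (x - y)).

Definition dist_set {R : rcfType} {d : nat} (X : {fset 'rV[R]_d}) : {fset R} :=
  [fset edist x y | x in X, y in X & x != y].

Definition is_s_distance_set {R : rcfType} {d : nat} (s : nat)
  (X : {fset 'rV[R]_d}) : Prop := #|` dist_set X| = s.

Definition antipodal {R : ringType} {d : nat} (X : {fset 'rV[R]_d}) : Prop :=
  forall x, x \in X -> - x \in X.

Definition on_unit_sphere {R : ringType} {d : nat} (X : {fset 'rV[R]_d}) : Prop :=
  forall x, x \in X -> dotp x x = 1.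

Definition Bset {R : ringType} {d : nat} (X : {fset 'rV[R]_d}) : {fset R} :=
  [fset dotp x y | x in X, y in X & x != y].

(* Main.v *)
Require Import Defs.
From HB Require Import structures.
From mathcomp Require Import all_boot all_order all_algebra.
From mathcomp Require Import finmap.
From mathcomp Require Import reals.
From mathcomp Require Import ring lra zify.
From Stdlib Require Import Classical.
Set Implicit Arguments. Unset Strict Implicit. Unset Printing Implicit Defensive.
Import Order.TTheory GRing.Theory Num.Theory.
Local Open Scope ring_scope.

Lemma mup_char (F : fieldType) m (B : 'M[F]_m) (a : F) :
  (m - \rank (B - a%:M)%R <= mup a (char_poly B))%N.
Proof.
set C := B - a%:M; set r := \rank C.
pose U := map_mx (@polyC F) (col_base C).
pose V := map_mx (@polyC F) (row_base C).
pose y : {poly F} := 'X - a%:P.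
have eB : char_poly_mx B = y%:M - U *m V.
  rewrite /char_poly_mx /U /V -map_mxM mulmx_base /C.
  apply/matrixP => i j; rewrite !mxE.
  rewrite rmorphB rmorphMn /=; case: (i == j); rewrite ?mulr1n ?mulr0n /= /y; [ring| by rewrite subr0].
set K := block_mx (y%:M : 'M_m) U V (1%:M : 'M_r).
have dK : \det K = char_poly B.
  have : block_mx (1%:M : 'M_m) (- U) 0 (1%:M : 'M_r) *m K =
         block_mx (char_poly_mx B) 0 V 1%:M.
    rewrite mulmx_block !mul1mx !mul0mx !add0r mulmx1 eB mulNmx.
    by rewrite addrC subrr.
  move/(congr1 determinant); rewrite det_mulmx det_ublock det_lblock !det1 !mul1r mulr1.
  by [].
have : block_mx (1%:M : 'M_m) 0 (- V) (y%:M : 'M_r) *m K =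
       block_mx (y%:M) U 0 (y%:M - V *m U).
  rewrite mulmx_block !mul1mx !mul0mx !addr0 mulmx1 mulNmx scalar_mxC addNr.
  by rewrite mulNmx addrC.
move/(congr1 determinant); rewrite det_mulmx det_lblock det_ublock det1 mul1r !det_scalar dK.
move=> e.
have rm : (r <= m)%N by apply: rank_leq_row.
have y0 : y ^+ r != 0 by rewrite expf_neq0 // polyXsubC_eq0.
have : char_poly B = y ^+ (m - r) * \det (y%:M - V *m U).
  apply: (mulfI y0); rewrite e mulrA -exprD subnKC //.
move=> ecp; rewrite mup_geq; last by rewrite monic_neq0 // char_poly_monic.
by rewrite ecp; apply: dvdp_mulIl.
Qed.
Section RatRoot.
Variable R : numFieldType.
Variable l : R.
Local Notation rr := (map_poly (@ratr R)).

Lemma rat_min_poly (h : {poly rat}) : h != 0 -> root (rr h) l ->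
  exists p : {poly rat}, [/\ p != 0, root (rr p) l &
     forall q : {poly rat}, root (rr q) l -> p %| q].
Proof.
move=> h0 rh.
have [p [p0 rp minp]] : exists p : {poly rat}, [/\ p != 0, root (rr p) l &
    forall q, q != 0 -> root (rr q) l -> (size p <= size q)%N].
  move: {2}(size h) (leqnn (size h)) => n; elim: n h h0 rh => [|n IH] h h0 rh hs.
    by move: hs; rewrite leqn0 size_poly_eq0 (negPf h0).
  case: (classic (exists q : {poly rat}, [/\ q != 0, root (rr q) l & (size q < size h)%N])).
    move=> [q [q0 rq sq]]; apply: (IH q q0 rq); rewrite -ltnS; exact: leq_trans sq hs.
  move=> nq; exists h; split => // q q0 rq; rewrite leqNgt; apply/negP => sq.
  by apply: nq; exists q.
exists p; split => // q rq.
apply/modp_eq0P; apply/eqP; apply/negPn/negP => r0.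
have rr0 : root (rr (q %% p)) l.
  have := rq; rewrite /root {1}(divp_eq q p) rmorphD rmorphM /= hornerD hornerM.
  by move: rp; rewrite /root => /eqP ->; rewrite mulr0 add0r.
by have := minp _ r0 rr0; rewrite leqNgt ltn_modp p0.
Qed.

Lemma rat_root_mult (h : {poly rat}) (M : nat) : h != 0 ->
  (M <= mup l (rr h))%N -> (size h <= 2 * M)%N -> exists q : rat, l = ratr q.
Proof.
move=> h0 Mh sh.
have rh0 : rr h != 0 by rewrite map_poly_eq0.
have M0 : (0 < M)%N.
  by case: M sh {Mh} => //; rewrite muln0 leqn0 size_poly_eq0 (negPf h0).
have rh : root (rr h) l by rewrite -dvdp_XsubCl XsubC_dvd //; exact: leq_trans M0 Mh.
have [p [p0 rp pmin]] := rat_min_poly h0 rh.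
have rp0 : rr p != 0 by rewrite map_poly_eq0.
have sp2 : (1 < size p)%N.
  rewrite ltnNge; apply/negP => sp1.
  have [c pc] : exists c, p = c%:P by exists p`_0; apply: size1_polyC.
  by move: rp p0; rewrite pc map_polyC /root hornerC fmorph_eq0 polyC_eq0 => ->.
have dp0 : p^`() != 0.
  apply/eqP => /(congr1 (fun q : {poly rat} => q`_(size p).-2)).
  rewrite coef_deriv coef0 prednK; last by rewrite -ltnS prednK // ltnW.
  move/eqP; rewrite mulrn_eq0 /= -lead_coefE lead_coef_eq0 (negPf p0) orbF.
  by case: (size p) sp2 => // [[]].
have ndp : ~~ root (rr p^`()) l.
  apply/negP => /pmin /(dvdp_leq dp0); rewrite leqNgt lt_size_deriv //.
have mp : mup l (rr p) = 1%N.
  apply/eqP; rewrite eqn_leq mup_leq // mup_geq // dvdp_XsubCl rp andbT.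
  apply/negP => /dvdpP [g eg]; move: ndp; apply/negP; rewrite negbK.
  rewrite -deriv_map eg derivM !exprS expr0 mulr1 derivM derivXsubC.
  by rewrite /root !hornerE subrr /= !mulr0 !add0r subrr mulr0.
have ind : forall j, (j <= M)%N -> exists g, h = p ^+ j * g.
  elim => [|j IH] jM; first by exists h; rewrite expr0 mul1r.
  have [g eg] := IH (ltnW jM).
  have g0 : g != 0 by apply: contra h0; rewrite eg => /eqP ->; rewrite mulr0.
  have : (j.+1 <= mup l (rr h))%N by exact: leq_trans jM Mh.
  rewrite eg rmorphM rmorphXn /= mupM ?expf_neq0 ?map_poly_eq0 //.
  have -> : forall k, mup l (rr p ^+ k) = k.
    elim => [|k IHk]; first by rewrite expr0 mupNroot // root1.
    by rewrite exprS mupM ?expf_neq0 // mp IHk.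
  rewrite -addn1 leq_add2l -XsubC_dvd ?map_poly_eq0 // dvdp_XsubCl => /pmin /dvdpP [g' eg'].
  by exists g'; rewrite eg' addn1 exprS; ring.
have [g eg] := ind M (leqnn M).
have g0 : g != 0 by apply: contra h0; rewrite eg => /eqP ->; rewrite mulr0.
have sp : size p = 2%N.
  have pM0 : p ^+ M != 0 by rewrite expf_neq0.
  have e1 := size_exp p M.
  have sg : (0 < size g)%N by rewrite size_poly_gt0.
  have spM : (0 < size (p ^+ M))%N by rewrite size_poly_gt0.
  move: sh; rewrite eg size_mul // => sh.
  have H : ((size p).-1 * M < 2 * M)%N.
    rewrite -e1; move: sh sg spM; move: (size (p ^+ M)) (size g) => a b; lia.
  move: H; rewrite ltn_mul2r M0 /=; move: sp2; case: (size p) => // n; lia.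
have p1 : p`_1 != 0.
  by move: p0; rewrite -lead_coef_eq0 lead_coefE sp.
exists (- p`_0 / p`_1).
move: rp; rewrite /root horner_coef size_map_poly sp big_ord_recr big_ord_recr big_ord0 /=.
rewrite !coef_map /= expr0 expr1 mulr1 add0r => /eqP e.
rewrite fmorph_div rmorphN /=.
apply: (mulfI (_ : ratr p`_1 != 0)); first by rewrite fmorph_eq0.
rewrite mulrCA divff ?fmorph_eq0 // mulr1; apply/eqP; rewrite -addr_eq0 addrC.
by rewrite e.
Qed.

End RatRoot.

Lemma rat_eigen (R : numFieldType) m (A : 'M[rat]_m) (l : R) :
  (2 * \rank (map_mx (@ratr R) A - l%:M)%R < m)%N -> exists q : rat, l = ratr q.
Proof.
move=> H; apply: (@rat_root_mult R l (char_poly A) (m - \rank (map_mx (@ratr R) A - l%:M))).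
- by rewrite monic_neq0 // char_poly_monic.
- by rewrite map_char_poly mup_char.
- by rewrite size_char_poly; lia.
Qed.
Section Hom.
Variable R : comNzRingType.
Variable D : nat.

Definition mon (x : 'rV[R]_D) (u : seq 'I_D) : R := \prod_(i <- u) x 0 i.

Definition Hom n (f : 'rV[R]_D -> R) :=
  exists s : seq (R * seq 'I_D), all (fun a => size a.2 == n) s /\
    forall x, f x = \sum_(a <- s) a.1 * mon x a.2.

Lemma Hom_ext n f g : f =1 g -> Hom n f -> Hom n g.
Proof. by move=> fg [s [hs e]]; exists s; split => // x; rewrite -fg. Qed.

Lemma Hom_eqn n n' f : n = n' -> Hom n f -> Hom n' f.
Proof. by move=> ->. Qed.

Lemma Hom0 n : Hom n (fun _ => 0).
Proof. by exists [::]; split => // x; rewrite big_nil. Qed.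

Lemma HomD n f g : Hom n f -> Hom n g -> Hom n (fun x => f x + g x).
Proof.
move=> [s [hs es]] [t [ht et]]; exists (s ++ t); split.
  by rewrite all_cat hs ht.
by move=> x; rewrite big_cat /= es et.
Qed.

Lemma HomZ n c f : Hom n f -> Hom n (fun x => c * f x).
Proof.
move=> [s [hs es]]; exists [seq (c * a.1, a.2) | a <- s]; split.
  by rewrite all_map.
by move=> x; rewrite big_map es mulr_sumr; apply: eq_bigr => a _; rewrite mulrA.
Qed.

Lemma HomM a b f g : Hom a f -> Hom b g -> Hom (a + b)%N (fun x => f x * g x).
Proof.
move=> [s [hs es]] [t [ht et]].
exists [seq (u.1 * v.1, u.2 ++ v.2) | u <- s, v <- t]; split.
  apply/allP => w /allpairsP [[u v] /= [us vt ->]] /=.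
  by rewrite size_cat (eqP (allP hs _ us)) (eqP (allP ht _ vt)).
move=> x; rewrite es et big_distrlr /=.
rewrite big_allpairs_dep /=.
apply: eq_bigr => u _; apply: eq_bigr => v _.
by rewrite /mon big_cat /=; ring.
Qed.

Lemma Hom1 : Hom 0 (fun _ => 1).
Proof. by exists [:: (1, [::])]; split => // x; rewrite big_seq1 /mon big_nil mulr1. Qed.

Lemma HomX n f k : Hom n f -> Hom (n * k)%N (fun x => f x ^+ k).
Proof.
move=> hf; elim: k => [|k IH].
  by rewrite muln0; apply: Hom_ext Hom1 => x; rewrite expr0.
by rewrite mulnS; apply: Hom_ext (HomM hf IH) => x; rewrite exprS.
Qed.

Lemma Hom_sum n K (F : 'I_K -> 'rV[R]_D -> R) :
  (forall i, Hom n (F i)) -> Hom n (fun x => \sum_(i < K) F i x).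
Proof.
elim: K F => [|K IH] F hF.
  by apply: Hom_ext (Hom0 n) => x; rewrite big_ord0.
apply: Hom_ext (HomD (IH (fun i => F (widen_ord (leqnSn K) i)) (fun i => hF _)) (hF ord_max)).
by move=> x; rewrite big_ord_recr.
Qed.

Lemma Hom_lin (y : 'rV[R]_D) : Hom 1 (fun x => \sum_(i < D) x 0 i * y 0 i).
Proof.
exists [seq (y 0 i, [:: i]) | i <- enum 'I_D]; split.
  by rewrite all_map; apply/allP.
move=> x; rewrite big_map big_enum /=; apply: eq_bigr => i _.
by rewrite /mon big_seq1 mulrC.
Qed.

Lemma Hom_sq : Hom 2 (fun x => \sum_(i < D) x 0 i * x 0 i).
Proof.
exists [seq (1, [:: i; i]) | i <- enum 'I_D]; split.
  by rewrite all_map; apply/allP.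
move=> x; rewrite big_map big_enum /=; apply: eq_bigr => i _.
by rewrite /mon big_cons big_seq1 mul1r.
Qed.

End Hom.

Section Rank.
Variable F : fieldType.
Variable d' : nat.
Local Notation D := d'.+1.
Let ordle := fun a b : 'I_D => (a <= b)%N.

Lemma ordle_total : total ordle.
Proof. by move=> a b; rewrite /ordle leq_total. Qed.

Lemma mon_sort (x : 'rV[F]_D) u : mon x (sort ordle u) = mon x u.
Proof. by apply: perm_big; rewrite perm_sort. Qed.

Lemma rank_hom m n (p : 'I_m -> 'rV[F]_D) (f : 'I_m -> 'rV[F]_D -> F) :
  (forall b, Hom n (f b)) -> (\rank (\matrix_(a, b) f b (p a)) <= 'C(n + d', n))%N.
Proof.
move=> hf.
pose S := [set t : n.-tuple 'I_D | sorted leq (map val t)].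
pose ev (k : 'I_#|S|) : n.-tuple 'I_D := enum_val k.
pose Et : 'M[F]_(#|S|, m) := \matrix_(k, a) mon (p a) (ev k).
have sub : ((\matrix_(a, b) f b (p a))^T <= Et)%MS.
  apply/row_subP => b; apply/submxP.
  have [s [hs es]] := hf b.
  exists (\row_k \sum_(c <- s) c.1 * ((sort ordle c.2 == val (ev k))%:R)).
  apply/rowP => a; rewrite !mxE es.
  symmetry; under eq_bigr do rewrite !mxE big_distrl /=.
  rewrite exchange_big /=; apply: eq_big_seq => c cs.
  have sc : size (sort ordle c.2) == n by rewrite size_sort (eqP (allP hs _ cs)).
  pose t0 : n.-tuple 'I_D := Tuple sc.
  have t0S : t0 \in S.
    by rewrite inE /= sorted_map; apply: sort_sorted; exact: ordle_total.
  under eq_bigr do rewrite -mulrA.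
  rewrite -mulr_sumr; congr (_ * _).
  rewrite -(big_enum_val (fun t : n.-tuple 'I_D => ((sort ordle c.2 == val t)%:R * mon (p a) t))).
  rewrite (bigD1 t0) //= eqxx mul1r big1 ?addr0 ?mon_sort // => t /andP [_ tt0].
  suff -> : (sort ordle c.2 == val t) = false by rewrite mul0r.
  apply/negP => /eqP e; move/negP: tt0; apply; apply/eqP/val_inj => /=; by rewrite e.
rewrite -mxrank_tr; apply: leq_trans (mxrankS sub) _.
apply: leq_trans (rank_leq_row _) _.
by rewrite card_sorted_tuples.
Qed.
End Rank.

Lemma rank_poly (F : fieldType) d' m (p : 'I_m -> 'rV[F]_d'.+1) (e K : nat) (r : nat -> F) :
  (forall i, dotp (p i) (p i) = 1) ->
  (\rank (\matrix_(a, b) \sum_(i < K) r i * dotp (p a) (p b) ^+ (e + 2 * i))%R <=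
     'C((e + 2 * K.-1) + d', e + 2 * K.-1))%N.
Proof.
move=> hp.
pose f (b : 'I_m) (x : 'rV[F]_d'.+1) :=
  \sum_(i < K) r i * (dotp x (p b) ^+ (e + 2 * i) * dotp x x ^+ (K.-1 - i)).
have -> : (\matrix_(a, b) \sum_(i < K) r i * dotp (p a) (p b) ^+ (e + 2 * i)) =
          \matrix_(a, b) f b (p a).
  apply/matrixP => a b; rewrite !mxE /f; apply: eq_bigr => i _.
  by rewrite hp expr1n mulr1.
apply: rank_hom => b; rewrite /f; apply: Hom_sum => i; apply: HomZ.
apply: (@Hom_eqn _ _ ((1 * (e + 2 * i)) + (2 * (K.-1 - i)))%N).
  by case: i => i /= iK; lia.
apply: HomM; apply: HomX; [exact: Hom_lin | exact: Hom_sq].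
Qed.

Section Dot.
Variable R : realFieldType.
Variable d : nat.
Implicit Types x y : 'rV[R]_d.

Lemma dotpC x y : dotp x y = dotp y x.
Proof. by apply: eq_bigr => i _; rewrite mulrC. Qed.

Lemma dotpNr x y : dotp x (- y) = - dotp x y.
Proof. by rewrite /dotp -sumrN; apply: eq_bigr => i _; rewrite mxE mulrN. Qed.

Lemma dotpNl x y : dotp (- x) y = - dotp x y.
Proof. by rewrite dotpC dotpNr dotpC. Qed.

Lemma dotp_sub x y : dotp (x - y) (x - y) = dotp x x + dotp y y - 2 * dotp x y.
Proof.
rewrite /dotp mulr_sumr -big_split -sumrB /=; apply: eq_bigr => i _.
by rewrite !mxE; ring.
Qed.

Lemma dotp_ge0 x : 0 <= dotp x x.
Proof. by apply: sumr_ge0 => i _; rewrite -expr2 sqr_ge0. Qed.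

Lemma dotp_eq0 x : dotp x x = 0 -> x = 0.
Proof.
move=> /eqP; rewrite psumr_eq0 => [|i _]; last by rewrite -expr2 sqr_ge0.
move=> /allP H; apply/rowP => i; rewrite mxE.
by have := H i (mem_index_enum _); rewrite -expr2 sqrf_eq0 => /eqP.
Qed.

Lemma unit_le1 x y : dotp x x = 1 -> dotp y y = 1 -> dotp x y <= 1.
Proof. by move=> hx hy; have := dotp_ge0 (x - y); rewrite dotp_sub hx hy; lra. Qed.

Lemma unit_eq1 x y : dotp x x = 1 -> dotp y y = 1 -> dotp x y = 1 -> x = y.
Proof.
move=> hx hy hxy; apply/eqP; rewrite -subr_eq0; apply/eqP/dotp_eq0.
by rewrite dotp_sub hx hy hxy; ring.
Qed.

Lemma unit_eqN1 x y : dotp x x = 1 -> dotp y y = 1 -> dotp x y = -1 -> y = - x.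
Proof.
move=> hx hy hxy; apply/eqP; rewrite -subr_eq0 opprK; apply/eqP/dotp_eq0.
have -> : y + x = y - (- x) by rewrite opprK.
by rewrite dotp_sub !dotpNl !dotpNr !opprK hx hy (dotpC y x) hxy; ring.
Qed.

End Dot.

Section BsetFacts.
Variable R : realFieldType.
Variable d : nat.

Lemma BsetP (X : {fset 'rV[R]_d}) b :
  reflect (exists x y, [/\ x \in X, y \in X, x != y & b = dotp x y]) (b \in Bset X).
Proof.
apply: (iffP (imfset2P _ _ _ _ _)).
  move=> [x xX [y]]; rewrite /= !inE /= => /andP [yX xy] ->.
  by exists x, y.
move=> [x [y [xX yX xy ->]]]; exists x => //; exists y => //.
by rewrite /= !inE /= yX xy.
Qed.
End BsetFacts.

Section Pos.
Variable R : realFieldType.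
Variable d : nat.

Definition pos (x : 'rV[R]_d) : bool :=
  if [pick i | x 0 i != 0] is Some i then 0 < x 0 i else false.

Lemma posN x : x != 0 -> pos (- x) = ~~ pos x.
Proof.
move=> x0; rewrite /pos.
have -> : [pick i | (- x) 0 i != 0] = [pick i | x 0 i != 0].
  by apply: eq_pick => i /=; rewrite mxE oppr_eq0.
case: pickP => [i xi | H].
  by rewrite mxE oppr_gt0 -leNgt lt_neqAle xi.
exfalso; move/negP: x0; apply; apply/eqP/rowP => i; rewrite mxE.
by move: (H i) => /= /negbFE /eqP.
Qed.

Lemma split_half (X : {fset 'rV[R]_d}) : (forall x, x \in X -> x != 0) -> antipodal X ->
  size (enum_fset X) = (2 * size [seq x <- enum_fset X | pos x])%N.
Proof.
move=> X0 aX; rewrite size_filter.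
have <- := count_predC pos (enum_fset X).
have -> : count (predC pos) (enum_fset X) = count pos (map -%R (enum_fset X)).
  rewrite count_map; apply: eq_in_count => x xX /=; rewrite posN //; exact: X0.
have pe : perm_eq (map -%R (enum_fset X)) (enum_fset X).
  apply: uniq_perm; first by rewrite (map_inj_uniq oppr_inj) fset_uniq.
    exact: fset_uniq.
  move=> x; apply/mapP/idP => [[y yX ->] | xX]; first by apply: aX.
  by exists (- x); [apply: aX | rewrite opprK].
by rewrite ((permP pe) pos) mul2n addnn.
Qed.
End Pos.

Lemma ratio_rat (R : realFieldType) d m (pt : 'I_m -> 'rV[R]_d) (G : R -> R) (b : R) (sg : rat) :
  (forall a, dotp (pt a) (pt a) = 1) ->
  G b != 0 -> b != - b ->
  G (- b) = ratr sg * G b ->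
  (forall a c, a != c -> dotp (pt a) (pt c) != b -> dotp (pt a) (pt c) != - b ->
      G (dotp (pt a) (pt c)) = 0) ->
  (2 * \rank (\matrix_(a, c) G (dotp (pt a) (pt c)))%R < m)%N ->
  exists q : rat, G 1 / G b = ratr q.
Proof.
move=> hp Gb bb Gnb G0 hr.
pose A : 'M[rat]_m := \matrix_(a, c) (if a == c then 0 else
   if dotp (pt a) (pt c) == b then 1 else if dotp (pt a) (pt c) == - b then sg else 0).
pose l := - (G 1 / G b).
have eM : (\matrix_(a, c) G (dotp (pt a) (pt c))) = G b *: (map_mx ratr A - l%:M).
  apply/matrixP => a c; rewrite !mxE.
  case: (eqVneq a c) => [<-|ac].
    by rewrite hp mulr1n rmorph0 sub0r /l opprK mulrC divfK.
  rewrite mulr0n subr0.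
  case: (eqVneq (dotp (pt a) (pt c)) b) => [->|n1]; first by rewrite rmorph1 mulr1.
  case: (eqVneq (dotp (pt a) (pt c)) (- b)) => [->|n2]; first by rewrite Gnb mulrC.
  by rewrite rmorph0 mulr0 G0.
move: hr; rewrite eM mxrank_scale_nz // => /rat_eigen [q hq].
by exists (- q); rewrite rmorphN /= -hq /l opprK.
Qed.

Section Main.
Variable R : realType.
Variables (d s : nat) (X : {fset 'rV[R]_d}).
Hypotheses (sph : on_unit_sphere X) (ant : antipodal X) (sd : is_s_distance_set s X).

Local Notation Bs := (Bset X).

Lemma X0 x : x \in X -> x != 0.
Proof.
move=> /sph h; apply/eqP => e; move: h; rewrite e /dotp big1 => [/eqP|i _].
  by rewrite eq_sym oner_eq0.
by rewrite mxE mul0r.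
Qed.

Lemma Bs_lt1 b : b \in Bs -> b < 1.
Proof.
move/BsetP => [x [y [xX yX xy ->]]]; rewrite lt_neqAle unit_le1 ?sph // andbT.
by apply: contra xy => /eqP e; apply/eqP/unit_eq1; rewrite ?sph.
Qed.

Lemma Bs_sym b : b \in Bs -> b != -1 -> - b \in Bs.
Proof.
move/BsetP => [x [y [xX yX xy ->]]] hb; apply/BsetP; exists x, (- y); split => //.
- exact: ant.
- by apply: contra hb => /eqP ->; rewrite dotpNl (sph yX).
- by rewrite dotpNr.
Qed.

Lemma Bs_card : (#|` Bs| <= s)%N.
Proof.
rewrite -sd; pose h := fun t : R => Num.sqrt (2 - 2 * t).
have U : uniq (map h (enum_fset Bs)).
  rewrite map_inj_in_uniq ?fset_uniq // => a b aB bB /eqP.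
  have := Bs_lt1 aB; have := Bs_lt1 bB => b1 a1.
  rewrite /h eqr_sqrt; [ | lra | lra] => /eqP; lra.
have sub : {subset map h (enum_fset Bs) <= enum_fset (dist_set X)}.
  move=> u /mapP [b bB ->]; have [x [y [xX yX xy ->]]] := BsetP _ _ bB.
  apply/imfset2P; exists x => //; exists y; first by rewrite /= !inE /= yX xy.
  by rewrite /edist dotp_sub !sph //; congr Num.sqrt; ring.
by rewrite -(size_map h); apply: uniq_leq_size.
Qed.

Definition zb : bool := 0 \in Bs.
Definition Gp (b : R) : {fset R} := [fset g in Bs | (0 < g) && (g != b) && (g != - b)]%fset.
Definition Qp (b : R) : {poly R} := \prod_(a <- [seq g ^+ 2 | g <- enum_fset (Gp b)]) ('X - a%:P).
Definition Pf (b t : R) : R := t ^+ zb * (Qp b).[t ^+ 2].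

Lemma GpP b g : (g \in Gp b) = [&& g \in Bs, 0 < g, g != b & g != - b].
Proof. rewrite !inE /= !andbA; reflexivity. Qed.

Lemma Qp_root b x : root (Qp b) x = (x \in [seq g ^+ 2 | g <- enum_fset (Gp b)]).
Proof. by rewrite /Qp root_prod_XsubC. Qed.

Lemma size_Qp b : size (Qp b) = (#|` Gp b|).+1.
Proof. by rewrite /Qp size_prod_XsubC size_map. Qed.

Lemma Pf_zero b g : g \in Bs -> g != -1 -> g != b -> g != - b -> Pf b g = 0.
Proof.
move=> gB g1 gb gnb; rewrite /Pf.
case: (ltgtP g 0) gB => [gneg gB | gpos gB | -> gB].
- have : root (Qp b) (g ^+ 2).
    rewrite Qp_root; apply/mapP; exists (- g); last by rewrite sqrrN.
    rewrite GpP Bs_sym //= oppr_gt0 gneg /=.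
    by rewrite eqr_oppLR (negPf gnb) eqr_opp gb.
  by rewrite /root => /eqP ->; rewrite mulr0.
- have : root (Qp b) (g ^+ 2).
    by rewrite Qp_root; apply/mapP; exists g => //; rewrite GpP gB gpos gb gnb.
  by rewrite /root => /eqP ->; rewrite mulr0.
- by rewrite /zb gB expr1 mul0r.
Qed.

Lemma Pf_b_neq0 b : b \in Bs -> b != 0 -> Pf b b != 0.
Proof.
move=> bB b0; rewrite /Pf mulf_neq0 ?expf_neq0 //.
suff : ~~ root (Qp b) (b ^+ 2) by [].
rewrite Qp_root; apply/mapP => [[g gG e]]; move: gG; rewrite GpP => /and4P [_ _ gb gnb].
by move/eqP: e; rewrite eqf_sqr eq_sym (negPf gb) /= -eqr_oppLR eq_sym (negPf gnb).
Qed.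

Lemma Qp1_neq0 b : (Qp b).[1] != 0.
Proof.
suff : ~~ root (Qp b) 1 by [].
rewrite Qp_root; apply/mapP => [[g gG]].
move: gG; rewrite GpP => /and4P [gB g0 _ _] /eqP.
rewrite eq_sym -(expr1n _ 2) eqf_sqr => /orP [/eqP e | /eqP e].
  by have := Bs_lt1 gB; rewrite e ltxx.
by move: g0; rewrite e ltr0N1.
Qed.

Lemma Pf1 b : Pf b 1 = (Qp b).[1].
Proof. by rewrite /Pf !expr1n mul1r. Qed.

Lemma Pf_neg b : Pf b (- b) = ratr ((-1) ^+ zb) * Pf b b.
Proof.
rewrite /Pf sqrrN; case: zb; rewrite ?expr0 ?expr1 ?rmorph1 ?rmorphN1 ?mul1r //.
by rewrite mulN1r mulNr.
Qed.

Lemma Pf_sum b t : Pf b t = \sum_(i < size (Qp b)) (Qp b)`_i * t ^+ (zb + 2 * i).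
Proof.
rewrite /Pf horner_coef mulr_sumr; apply: eq_bigr => i _.
by rewrite exprD exprM mulrCA.
Qed.


Lemma neg1_in b : b \in Bs -> -1 \in Bs.
Proof.
move/BsetP => [x [y [xX yX xy _]]]; apply/BsetP; exists x, (- x); split => //.
- exact: ant.
- apply/eqP => e; have := dotpNr x x; rewrite -e (sph xX) => /eqP.
  by rewrite -addr_eq0 -mulr2n mulrn_eq0 oner_eq0.
- by rewrite dotpNr (sph xX).
Qed.

Lemma count_Gp b : b \in Bs -> b != -1 -> b != 0 -> (zb + 2 * #|` Gp b| + 3 <= #|` Bs|)%N.
Proof.
move=> bB b1 b0.
have bl1 := Bs_lt1 bB.
have gsP x : (x \in enum_fset (Gp b)) = [&& x \in Bs, 0 < x, x != b & x != - b] by exact: GpP.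
have gsu : uniq (enum_fset (Gp b)) by exact: fset_uniq.
move: gsP gsu; rewrite -[#|` Gp b|]/(size (enum_fset (Gp b))).
move: (enum_fset (Gp b)) => gs gsP gsu.
pose L := gs ++ map -%R gs ++ (if zb then [:: 0] else [::]) ++ [:: b; - b; -1].
have sL : size L = (zb + 2 * size gs + 3)%N.
  by rewrite /L !size_cat size_map; case: zb => /=; lia.
rewrite -sL; apply: uniq_leq_size.
- have bnb : (b == - b) = false.
    by apply/negbTE; rewrite -addr_eq0 -mulr2n mulrn_eq0 /= b0.
  have nbn1 : (- b == -1) = false by rewrite eqr_opp lt_eqF.
  have b10 : (b == 0) = false by apply/negbTE.
  have nb0 : (- b == 0) = false by rewrite oppr_eq0.
  rewrite /L !cat_uniq gsu (map_inj_uniq oppr_inj) gsu /=.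
  apply/and4P; split.
  + apply/hasPn => x; rewrite !mem_cat => /or3P [/mapP [g gG ->] | | ].
    * move: gG; rewrite !gsP => /and4P [_ g0 _ _].
      apply/negP => /and4P [_ ].
      by rewrite oppr_gt0 => /(lt_trans g0); rewrite ltxx.
    * by case: zb => //; rewrite inE => /eqP ->; rewrite gsP ltxx !andbF.
    * rewrite !inE => /or3P [] /eqP ->; rewrite gsP ?eqxx ?andbF //=.
      by rewrite ltr0N1 !andbF.
  + apply/hasPn => x; rewrite mem_cat => /orP [ | ].
    * case: zb => //; rewrite inE => /eqP ->; apply/negP => /mapP [g gG /eqP].
      by rewrite eq_sym oppr_eq0 => /eqP g0; move: gG; rewrite gsP g0 ltxx !andbF.
    * rewrite !inE => /or3P [] /eqP ->; apply/negP => /mapP [g gG e];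
        move: gG; rewrite gsP => /and4P [gB g0 gb gnb].
      - by move: gnb; rewrite e opprK eqxx.
      - by move: gb; rewrite (oppr_inj e) eqxx.
      - by have := Bs_lt1 gB; rewrite -(oppr_inj e) ltxx.
  + by case: zb; rewrite /= ?inE ?bnb ?nbn1 ?b10 ?nb0 ?(negPf b1) ?oppr_eq0 ?oner_eq0.
  + by case: zb; rewrite /= ?inE ?bnb ?nbn1 ?b10 ?nb0 ?(negPf b1) ?oppr_eq0 ?oner_eq0.
- move=> x; rewrite /L !mem_cat => /or4P [ | /mapP [g gG ->] | | ].
  + by rewrite gsP => /and4P [].
  + move: gG; rewrite gsP => /and4P [gB g0 _ _]; apply: Bs_sym => //.
    by apply: contraTneq g0 => ->; rewrite ltr0N1.
  + by case E: zb => //; rewrite inE => /eqP ->; move: E; rewrite /zb => ->.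
  + rewrite !inE => /or3P [] /eqP -> //; first exact: Bs_sym.
    exact: neg1_in bB.
Qed.


Lemma bin_mono n n' d' : (n <= n')%N -> ('C(n + d', n) <= 'C(n' + d', n'))%N.
Proof.
move=> nn'.
have e n0 : 'C(n0 + d', n0) = 'C(n0 + d', d').
  by rewrite -[X in 'C(_, X)](addnK d' n0) bin_sub // leq_addl.
by rewrite !e; apply: leq_bin2l; rewrite leq_add2r.
Qed.

End Main.


Unset Implicit Arguments.
Local Open Scope fset_scope.

Theorem theorem5p4 (R : realType) (d s : nat) (X : {fset 'rV[R]_d}) :
  (4 <= s)%N ->
  on_unit_sphere X ->
  antipodal X ->
  is_s_distance_set s X ->
  (4 * 'C(d + s - 3, s - 2) + 2 <= #|` X|)%N ->
  forall beta, beta \in Bset X -> exists q : rat, beta = ratr q.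
Proof.
move=> s4 sph ant sd hX beta bB.
have [->|b1] := eqVneq beta (-1); first by exists (-1); rewrite rmorphN1.
have [->|b0] := eqVneq beta 0; first by exists 0; rewrite rmorph0.
have [x0 x0X] : exists x, x \in X.
  by have [x [y [xX _ _ _]]] := BsetP _ _ bB; exists x.
case: d X sph ant sd hX bB x0 x0X => [|d'] X sph ant sd hX bB x0 x0X.
  by have := sph _ x0X; rewrite /dotp big_ord0 => /eqP; rewrite eq_sym oner_eq0.
pose Ys := [seq x <- enum_fset X | pos x].
pose m := size Ys.
pose pt (i : 'I_m) := nth 0 Ys i.
have hm : #|` X| = (2 * m)%N by apply: split_half => //; exact: X0.
pose N := 'C(s - 2 + d', s - 2).
have hN : (2 * N < m)%N.
  move: hX; rewrite hm /N (_ : (d'.+1 + s - 3 = s - 2 + d')%N); last by lia.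
  lia.
have ptX i : pt i \in X.
  by have := mem_nth 0 (ltn_ord i); rewrite mem_filter => /andP [].
have ptpos i : pos (pt i).
  by have := mem_nth 0 (ltn_ord i); rewrite mem_filter => /andP [].
have ptu i : dotp (pt i) (pt i) = 1 by apply: sph.
have ptinj a c : a != c -> pt a != pt c.
  move=> ac; rewrite /pt nth_uniq ?ltn_ord //; last by rewrite filter_uniq // fset_uniq.
have ptB a c : a != c -> dotp (pt a) (pt c) \in Bset X.
  by move=> ac; apply/BsetP; exists (pt a), (pt c); split => //; apply: ptinj.
have ptn1 a c : a != c -> dotp (pt a) (pt c) != -1.
  move=> ac; apply/eqP => e; have := unit_eqN1 (ptu a) (ptu c) e.
  move=> ec; have := ptpos c; rewrite ec posN ?ptpos //.
  exact: X0 sph _ (ptX a).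
have cnt := count_Gp sph ant bB b1 b0.
have sB := Bs_card sph sd.
have sQ := size_Qp X beta.
have bnb : beta != - beta.
  by rewrite -addr_eq0 -mulr2n mulrn_eq0 /= b0.
pose K := size (Qp X beta).
have [q1 hq1] : exists q : rat, Pf X beta 1 / Pf X beta beta = ratr q.
  apply: (@ratio_rat R d'.+1 m pt (Pf X beta) beta ((-1) ^+ zb X)) => //.
  - exact: Pf_b_neq0.
  - exact: Pf_neg.
  - move=> a c ac h1 h2; apply: Pf_zero => //; [exact: ptB | exact: ptn1].
  - have -> : (\matrix_(a, c) Pf X beta (dotp (pt a) (pt c)))%R =
              (\matrix_(a, c) \sum_(i < K) (Qp X beta)`_i * dotp (pt a) (pt c) ^+ (zb X + 2 * i))%R.
      by apply/matrixP => a c; rewrite !mxE Pf_sum.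
    apply: leq_ltn_trans hN; rewrite leq_mul2l /=.
    apply: leq_trans (@rank_poly _ d' m pt (zb X) K (fun i => (Qp X beta)`_i) ptu) _.
    apply: bin_mono; rewrite /K sQ /=; move: cnt sB; move: (nat_of_bool (zb X)) (#|` Gp X beta|) (#|` Bset X|) => ? ? ?; lia.
have [q2 hq2] : exists q : rat, (1 * Pf X beta 1) / (beta * Pf X beta beta) = ratr q.
  apply: (@ratio_rat R d'.+1 m pt (fun t => t * Pf X beta t) beta (- (-1) ^+ zb X)) => //.
  - by rewrite mulf_neq0 // Pf_b_neq0.
  - by rewrite /= Pf_neg rmorphN !mulNr mulrCA.
  - move=> a c ac h1 h2; rewrite Pf_zero ?mulr0 //; [exact: ptB | exact: ptn1].
  - have -> : (\matrix_(a, c) (dotp (pt a) (pt c) * Pf X beta (dotp (pt a) (pt c))))%R =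
              (\matrix_(a, c) \sum_(i < K) (Qp X beta)`_i * dotp (pt a) (pt c) ^+ ((zb X).+1 + 2 * i))%R.
      apply/matrixP => a c; rewrite !mxE Pf_sum mulr_sumr; apply: eq_bigr => i _.
      by rewrite addSn exprS mulrCA.
    apply: leq_ltn_trans hN; rewrite leq_mul2l /=.
    apply: leq_trans (@rank_poly _ d' m pt (zb X).+1 K (fun i => (Qp X beta)`_i) ptu) _.
    apply: bin_mono; rewrite /K sQ /=; move: cnt sB; move: (nat_of_bool (zb X)) (#|` Gp X beta|) (#|` Bset X|) => ? ? ?; lia.
exists (q1 / q2); rewrite fmorph_div /= -hq1 -hq2 mul1r.
have P1 : Pf X beta 1 != 0 by rewrite Pf1 Qp1_neq0.
have Pb := Pf_b_neq0 bB b0.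
by field; rewrite P1 Pb b0.
Qed.
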